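(* Let $K$ be an algebraically closed field, $R=K[x_1,\dots,x_N]$, and let $G\subset R$ be a finite set of monomials. Suppose there are subsets $S_0,\dots,S_r$ of $G$ such that (i) $\bigcup_{i=0}^r S_i=G$; (ii) $S_0$ has exactly one element; (iii) the following recursive procedure can always be performed and always comes to an end, regardless of the choice of the indeterminate $z$ and of the index $j$ at each step: 0. Set $T=S_0$. 1. Pick an indeterminate $z$ dividing the only element of $T$. 2. Cancel (remove) all monomials divisible by $z$ from every $S_i$ (and from $G$). 3. If no element of $G$ is left, end. Otherwise pick an index $j$ such that exactly one element is left in $S_j$ (such an index must exist for the procedure to be performable), and set $T$ equal to the current $S_j$. 4. Go to 1. For $i=0,\dots,r$ set $q_i=\sum_{\mu\in S_i}\mu$. Then $$\sqrt{(G)}=\sqrt{(q_0,\dots,q_r)}.$$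
   Context: $(G)$ denotes the ideal of $R$ generated by $G$; $\sqrt{J}$ denotes the radical of an ideal $J$. Condition (iii) means: for every sequence of choices, whenever monomials of $G$ remain after step 2, some $S_j$ has exactly one remaining element, and after finitely many steps all monomials of $G$ have been cancelled. *)

(* Defs.v *)
From HB Require Import structures.
From mathcomp Require Import all_boot all_order all_algebra.
From mathcomp Require Import finmap.
From mathcomp Require Import mpoly.
Set Implicit Arguments. Unset Strict Implicit. Unset Printing Implicit Defensive.
Import GRing.Theory.
Local Open Scope ring_scope.
Local Open Scope fset_scope.

Definition in_ideal (R : comNzRingType) (gs : seq R) (f : R) : Prop :=
  exists c : 'I_(size gs) -> R, f = \sum_(i < size gs) c i * gs`_i.

Definition in_radical (R : comNzRingType) (gs : seq R) (f : R) : Prop :=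
  exists n : nat, in_ideal gs (f ^+ n).

Definition alive (N : nat) (Z : {set 'I_N}) (m : 'X_{1..N}) : bool :=
  [forall i in Z, m i == 0%N].

Definition remaining (N : nat) (A : {fset 'X_{1..N}}) (Z : {set 'I_N})
  : seq 'X_{1..N} := [seq m <- enum_fset A | alive Z m].

(* Reachable states (Z, t) of the procedure of condition (iii):
   Z = set of indeterminates chosen so far (so the monomials cancelled are
   exactly those divisible by some element of Z), t = the only element of T. *)
Inductive reach (N r : nat) (G : {fset 'X_{1..N}})
    (S : 'I_r.+1 -> {fset 'X_{1..N}}) : {set 'I_N} -> 'X_{1..N} -> Prop :=
| reach_start t : t \in S ord0 -> reach G S set0 t
| reach_step Z t (z : 'I_N) (j : 'I_r.+1) t' :
    reach G S Z t ->
    (0 < t z)%N ->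
    has (alive (z |: Z)) (enum_fset G) ->
    remaining (S j) (z |: Z) = [:: t'] ->
    reach G S (z |: Z) t'.

(* Condition (iii): at every reachable state, step 1 can be performed, and
   for every choice of z in step 1, if monomials of G remain then some S_j
   has exactly one remaining element.  (Termination is automatic: each step
   cancels the current monomial t, which was not yet cancelled.) *)
Definition procedure_ok (N r : nat) (G : {fset 'X_{1..N}})
    (S : 'I_r.+1 -> {fset 'X_{1..N}}) : Prop :=
  forall Z t, reach G S Z t ->
    (exists z : 'I_N, (0 < t z)%N) /\
    (forall z : 'I_N, (0 < t z)%N -> has (alive (z |: Z)) (enum_fset G) ->
       exists j : 'I_r.+1, size (remaining (S j) (z |: Z)) = 1%N).

(* Main.v *)
Require Import Defs.
From HB Require Import structures.
From mathcomp Require Import all_boot all_order all_algebra.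
From mathcomp Require Import finmap.
From mathcomp Require Import mpoly.
From mathcomp Require Import zify.
Import GRing.Theory.
Set Implicit Arguments. Unset Strict Implicit.
Local Open Scope ring_scope.
Local Open Scope fset_scope.

Section Gen.
Variable R : comNzRingType.

Inductive gen (P : R -> Prop) : R -> Prop :=
| g_base x : P x -> gen P x
| g_zero : gen P 0
| g_add x y : gen P x -> gen P y -> gen P (x + y)
| g_mul a x : gen P x -> gen P (a * x).

Definition rad (P : R -> Prop) (f : R) := exists n, gen P (f ^+ n).

Lemma gen_mulr P x a : gen P x -> gen P (x * a).
Proof. by move=> h; rewrite mulrC; apply: g_mul. Qed.

Lemma gen_opp P x : gen P x -> gen P (- x).
Proof. by move=> h; rewrite -mulN1r; apply: g_mul. Qed.

Lemma gen_sub P x y : gen P x -> gen P y -> gen P (x - y).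
Proof. by move=> h1 h2; apply: g_add => //; apply: gen_opp. Qed.

Lemma gen_muln P x k : gen P x -> gen P (x *+ k).
Proof. by move=> h; rewrite -mulr_natl; apply: g_mul. Qed.

Lemma gen_sum (P : R -> Prop) (I : Type) (s : seq I) (Q : pred I) (F : I -> R) :
  (forall i, Q i -> gen P (F i)) -> gen P (\sum_(i <- s | Q i) F i).
Proof.
move=> h; elim/big_rec: _ => [|i x Qi hx]; first exact: g_zero.
by apply: g_add => //; apply: h.
Qed.

Lemma gen_mono (P Q : R -> Prop) : (forall x, P x -> gen Q x) ->
  forall f, gen P f -> gen Q f.
Proof.
move=> h f; elim => [x /h //| |x y _ hx _ hy|a x _ hx].
- exact: g_zero.
- exact: g_add.
- exact: g_mul.
Qed.

Lemma rad_mono (P Q : R -> Prop) : (forall x, P x -> gen Q x) ->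
  forall f, rad P f -> rad Q f.
Proof. by move=> h f [n hn]; exists n; apply: gen_mono hn. Qed.

Lemma gen_exp_le P x a b : (a <= b)%N -> gen P (x ^+ a) -> gen P (x ^+ b).
Proof. by move=> hab h; rewrite -(subnK hab) exprD; apply: g_mul. Qed.

Lemma rad_add P x y : rad P x -> rad P y -> rad P (x + y).
Proof.
move=> [a ha] [b hb]; exists (a + b)%N; rewrite exprDn.
apply: gen_sum => i _; apply: gen_muln.
case: (leqP b i) => hi.
  by apply: g_mul; apply: gen_exp_le hb.
apply: gen_mulr; apply: gen_exp_le ha.
have := ltn_ord i; lia.
Qed.

Lemma rad_mul P a x : rad P x -> rad P (a * x).
Proof. by move=> [n hn]; exists n; rewrite exprMn; apply: g_mul. Qed.

Lemma rad_gen (P Q : R -> Prop) : (forall y, P y -> rad Q y) ->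
  forall x, gen P x -> rad Q x.
Proof.
move=> h x; elim => [y /h //| |y z _ hy _ hz|a y _ hy].
- by exists 1%N; rewrite expr1; apply: g_zero.
- exact: rad_add.
- exact: rad_mul.
Qed.

Lemma rad_rad P x : rad (rad P) x -> rad P x.
Proof.
move=> [n hn]; have [k hk] := @rad_gen (rad P) P (fun y h => h) _ hn.
by exists (n * k)%N; rewrite exprM.
Qed.

Definition addP (P : R -> Prop) (a : R) := fun x => P x \/ x = a.

Lemma gen_prod P a b u v : gen (addP P a) u -> gen (addP P b) v ->
  gen (addP P (a * b)) (u * v).
Proof.
have hP : forall Q x, P x -> gen (addP P Q) x by move=> Q x h; apply: g_base; left.
elim => [x [hx|->]| |x y _ hx _ hy|c x _ hx] hv.
- by apply: gen_mulr; apply: hP.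
- elim: hv => [y [hy|->]| |y z _ hy _ hz|c y _ hy].
  + by apply: g_mul; apply: hP.
  + by apply: g_base; right.
  + by rewrite mulr0; apply: g_zero.
  + by rewrite mulrDr; apply: g_add.
  + by rewrite mulrCA; apply: g_mul.
- by rewrite mul0r; apply: g_zero.
- by rewrite mulrDl; apply: g_add; [apply: hx|apply: hy].
- by rewrite -mulrA; apply: g_mul; apply: hx.
Qed.

Lemma rad_prod P a b m : rad (addP P a) m -> rad (addP P b) m ->
  rad (addP P (a * b)) m.
Proof.
move=> [k hk] [l hl]; exists (k + l)%N; rewrite exprD.
exact: gen_prod.
Qed.

Lemma rad_one P m : rad (addP P 1) m.
Proof. by exists 1%N; rewrite expr1 -[m]mulr1; apply: g_mul; apply: g_base; right. Qed.

Lemma rad_expn P a m k : rad (addP P a) m -> rad (addP P (a ^+ k)) m.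
Proof.
move=> h; elim: k => [|k ih]; first by rewrite expr0; apply: rad_one.
by rewrite exprS; apply: rad_prod.
Qed.

Lemma rad_bigprod P (I : finType) (F : I -> R) m :
  (forall i, rad (addP P (F i)) m) -> rad (addP P (\prod_i F i)) m.
Proof.
move=> h; elim/big_rec: _ => [|i x _ hx]; first exact: rad_one.
exact: rad_prod.
Qed.

Lemma rad_drop P a m : gen P a -> rad (addP P a) m -> rad P m.
Proof.
move=> ha; apply: rad_mono => x [hx|->] //; exact: g_base.
Qed.

Lemma in_idealP (gs : seq R) f : in_ideal gs f <-> gen (fun x => x \in gs) f.
Proof.
split.
  move=> [c ->]; apply: gen_sum => i _; apply: g_mul; apply: g_base.
  exact: mem_nth.
elim => [x hx| |x y _ [c1 ->] _ [c2 ->]|a x _ [c ->]].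
- have hi : (index x gs < size gs)%N by rewrite index_mem.
  exists (fun i => if i == Ordinal hi then 1 else 0).
  rewrite (bigD1 (Ordinal hi)) //= eqxx mul1r nth_index // big1 ?addr0 //.
  by move=> i /negbTE ->; rewrite mul0r.
- by exists (fun _ => 0); rewrite big1 // => i _; rewrite mul0r.
- by exists (fun i => (c1 i + c2 i)%R); rewrite -big_split; apply: eq_bigr => i _; rewrite mulrDl.
- by exists (fun i => (a * c i)%R); rewrite mulr_sumr; apply: eq_bigr => i _; rewrite mulrA.
Qed.

Lemma in_radicalP (gs : seq R) f : in_radical gs f <-> rad (fun x => x \in gs) f.
Proof. by split=> [[n /in_idealP h]|[n h]]; exists n => //; apply/in_idealP. Qed.

End Gen.
Local Open Scope ring_scope.
Section Main.
Variables (K : closedFieldType) (N r : nat) (G : {fset 'X_{1..N}})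
  (S : 'I_r.+1 -> {fset 'X_{1..N}}).

Definition q i : {mpoly K[N]} := \sum_(m <- enum_fset (S i)) 'X_[m].

Definition PZ (Z : {set 'I_N}) (x : {mpoly K[N]}) :=
  (exists i, x = q i) \/ (exists z, z \in Z /\ x = 'X_z).

Lemma sum_split (A : {fset 'X_{1..N}}) Z :
  \sum_(m <- enum_fset A) ('X_[m] : {mpoly K[N]}) =
  \sum_(m <- remaining A Z) 'X_[m] + \sum_(m <- enum_fset A | ~~ alive Z m) 'X_[m].
Proof. by rewrite /remaining big_filter (bigID (alive Z)). Qed.

Lemma notalive_gen (P : {mpoly K[N]} -> Prop) (Z : {set 'I_N}) (m : 'X_{1..N}) :
  (forall z, z \in Z -> gen P 'X_z) -> ~~ alive Z m -> gen P 'X_[m].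
Proof.
move=> hZ /forallPn [i]; rewrite negb_imply => /andP [iZ mi].
rewrite mpolyXE_id (bigD1 i) //=.
have -> : m i = (m i).-1.+1 by rewrite prednK // lt0n.
by rewrite exprS -mulrA; apply: gen_mulr; apply: hZ.
Qed.

Lemma reach_rem (Z : {set 'I_N}) t : #|` S ord0| = 1%N -> reach G S Z t ->
  exists j, remaining (S j) Z = [:: t].
Proof.
move=> hS; case => [t0 ht0 | Z0 t0 z j t' _ _ _ h]; last by exists j.
exists ord0.
have -> : remaining (S ord0) set0 = enum_fset (S ord0).
  rewrite /remaining (@eq_filter _ _ predT) ?filter_predT // => m.
  by apply/forallP => i; rewrite in_set0.
move: hS (ht0 : t0 \in enum_fset (S ord0)); case: (enum_fset (S ord0)) => [|a [|b s]] //= _.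
by rewrite mem_seq1 => /eqP ->.
Qed.

Lemma reach_alive (Z : {set 'I_N}) t : #|` S ord0| = 1%N -> reach G S Z t -> alive Z t.
Proof.
move=> hS /(reach_rem hS) [j hj].
have : t \in remaining (S j) Z by rewrite hj mem_seq1.
by rewrite mem_filter => /andP [].
Qed.

Lemma reach_gen (Z : {set 'I_N}) t : #|` S ord0| = 1%N -> reach G S Z t -> gen (PZ Z) 'X_[t].
Proof.
move=> hS /(reach_rem hS) [j hj].
have hq := sum_split (S j) Z; rewrite hj big_seq1 in hq.
have -> : 'X_[t] = q j - \sum_(m <- enum_fset (S j) | ~~ alive Z m) 'X_[m].
  by rewrite /q hq addrK.
apply: gen_sub; first by apply: g_base; left; exists j.
apply: gen_sum => m hm; apply: (notalive_gen _ hm) => z hz.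
by apply: g_base; right; exists z.
Qed.

Lemma main_claim : #|` S ord0| = 1%N -> procedure_ok G S ->
  forall n (Z : {set 'I_N}) t, (N - #|Z| < n)%N -> reach G S Z t ->
  forall m, m \in G -> rad (PZ Z) 'X_[m].
Proof.
move=> hS hok; elim => [//|n IH] Z t hn hr m hm.
have [_ hj] := hok Z t hr.
have hal := reach_alive hS hr.
apply: (rad_drop (reach_gen hS hr)).
rewrite mpolyXE_id; apply: rad_bigprod => i.
case: (posnP (t i)) => [->|ti]; first by rewrite expr0; apply: rad_one.
apply: rad_expn.
have iZ : i \notin Z.
  apply/negP => iZ; move/forallP: hal => /(_ i); rewrite iZ /= => /eqP ti0.
  by rewrite ti0 in ti.
have hsub : forall x, PZ (i |: Z) x -> gen (addP (PZ Z) 'X_i) x.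
  move=> x [[k ->]|[z [hz ->]]]; first by apply: g_base; left; left; exists k.
  move: hz; rewrite in_setU1 => /orP [/eqP ->|hz]; first by apply: g_base; right.
  by apply: g_base; left; right; exists z.
case hG: (has (alive (i |: Z)) (enum_fset G)).
  have [j hsz] := hj i ti hG.
  move: hsz; case E: (remaining (S j) (i |: Z)) => [|t' [|? ?]] // _.
  have hr' : reach G S (i |: Z) t' by apply: (reach_step hr ti hG E).
  apply: (rad_mono hsub); apply: (IH _ _ _ hr') => //.
  have := max_card (mem (i |: Z)); rewrite card_ord cardsU1 iZ /=.
  move: hn; rewrite /nat_of_bool; set k := #|Z|; lia.
have hna : ~~ alive (i |: Z) m.
  by apply: (hasPn (negbT hG)).
exists 1%N; rewrite expr1; apply: (notalive_gen _ hna) => z hz.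
by apply: hsub; right; exists z.
Qed.
End Main.

Theorem proposition2 (K : closedFieldType) (N r : nat)
    (G : {fset 'X_{1..N}}) (S : 'I_r.+1 -> {fset 'X_{1..N}}) :
  (forall i, S i `<=` G) ->
  (forall m, m \in G -> exists i, m \in S i) ->
  #|` S ord0| = 1%N ->
  procedure_ok G S ->
  forall f : {mpoly K[N]},
    in_radical [seq 'X_[m] | m <- enum_fset G] f <->
    in_radical [seq \sum_(m <- enum_fset (S i)) 'X_[m] | i <- enum 'I_r.+1] f.
Proof.
move=> hsub _ hS hok f; rewrite !in_radicalP.
have hq : forall i, q K S i \in
    [seq \sum_(m <- enum_fset (S i)) 'X_[m] | i <- enum 'I_r.+1].
  by move=> i; apply: (map_f (fun i => \sum_(m <- enum_fset (S i)) 'X_[m])); rewrite mem_enum.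
split.
  move=> [n hn]; apply: rad_rad; exists n.
  apply: (gen_mono _ hn) => x /mapP [m hm ->]; apply: g_base.
  have [t0 ht0] : exists t0, t0 \in enum_fset (S ord0).
    by move: hS; case: (enum_fset (S ord0)) => [|a s] // _; exists a; rewrite inE eqxx.
  have hr : reach G S set0 t0 by apply: reach_start.
  have := @main_claim K N r G S hS hok _ set0 t0 (ltnSn _) hr m hm.
  apply: rad_mono => y [[i ->]|[z []]]; last by rewrite in_set0.
  by apply: g_base; apply: hq.
apply: rad_mono => x /mapP [i _ ->].
rewrite big_seq; apply: gen_sum => m hm; apply: g_base.
apply: map_f; exact: (fsubsetP (hsub i) m hm).
Qed.
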